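(* Let $R$ be a ring with no right subprojective middle class. Then every right $R$-module is subprojective extension-reflecting.
   Context: For right $R$-modules $X,Y$, $X\in \underline{\mathfrak{Pr}}^{-1}(Y)$ means: for every epimorphism $g\colon B\to X$ and every homomorphism $f\colon Y\to X$ there exists $h\colon Y\to B$ with $gh=f$; $\underline{\mathfrak{Pr}}^{-1}(Y)$ is the class of all such $X$. A module $N$ is p-indigent if $\underline{\mathfrak{Pr}}^{-1}(N)$ equals the class of projective modules. $R$ has no right subprojective middle class if every right $R$-module is either projective or p-indigent. $M$ is subprojective extension-reflecting if for every short exact sequence $0\to A\to B\to C\to 0$, $M\in \underline{\mathfrak{Pr}}^{-1}(A)\cap \underline{\mathfrak{Pr}}^{-1}(C)$ implies $M\in \underline{\mathfrak{Pr}}^{-1}(B)$. *)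

(* Defs.v *)
(* Right R-modules are modelled as left modules over the
   converse ring R^c (lmodType R^c); homomorphisms are R^c-linear maps. *)
From HB Require Import structures.
From mathcomp Require Import all_boot all_algebra.
Set Implicit Arguments. Unset Strict Implicit. Unset Printing Implicit Defensive.
Import GRing.Theory.
Local Open Scope ring_scope.

Section RightModules.
Variable R : nzRingType.

Definition rmodType := lmodType R^c.

Definition epi (U V : rmodType) (g : {linear U -> V}) : Prop :=
  forall v : V, exists u : U, g u = v.

Definition subproj_in (X Y : rmodType) : Prop :=
  forall (B : rmodType) (g : {linear B -> X}) (f : {linear Y -> X}),
    epi g -> exists h : {linear Y -> B}, forall y : Y, g (h y) = f y.

Definition projective (P : rmodType) : Prop :=
  forall (B C : rmodType) (g : {linear B -> C}) (f : {linear P -> C}),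
    epi g -> exists h : {linear P -> B}, forall y : P, g (h y) = f y.

Definition p_indigent (N : rmodType) : Prop :=
  forall X : rmodType, subproj_in X N <-> projective X.

Definition no_right_subprojective_middle_class : Prop :=
  forall M : rmodType, projective M \/ p_indigent M.

Definition short_exact (A B C : rmodType) (i : {linear A -> B}) (p : {linear B -> C}) : Prop :=
  injective i /\ epi p /\ (forall b : B, p b = 0 <-> exists a : A, i a = b).

Definition subproj_ext_reflecting (M : rmodType) : Prop :=
  forall (A B C : rmodType) (i : {linear A -> B}) (p : {linear B -> C}),
    short_exact i p -> subproj_in M A -> subproj_in M C -> subproj_in M B.

End RightModules.

(* Main.v *)
Require Import Defs.
From HB Require Import structures.
From mathcomp Require Import all_boot all_algebra.
Set Implicit Arguments. Unset Strict Implicit. Unset Printing Implicit Defensive.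
Import GRing.Theory.
Local Open Scope ring_scope.

Section Split.
Variable R : nzRingType.
Variables (A B C X Y : rmodType R) (i : {linear A -> B}) (p : {linear B -> C})
  (s : {linear C -> B}) (g : {linear X -> Y}) (f : {linear B -> Y})
  (hA : {linear A -> X}) (hC : {linear C -> X}).
Hypothesis inj_i : injective i.
Hypothesis ex_i : forall b : B, p b = 0 <-> exists a : A, i a = b.
Hypothesis ps : forall c, p (s c) = c.

Lemma ex_r (b : B) : exists a : A, i a == b - s (p b).
Proof.
have [/(_ _) H _] := ex_i (b - s (p b)).
have [|a Ha] := H; first by rewrite linearB /= ps subrr.
by exists a; apply/eqP.
Qed.

Definition rfun (b : B) : A := xchoose (ex_r b).
Lemma rfunP b : i (rfun b) = b - s (p b).
Proof. exact/eqP/(xchooseP (ex_r b)). Qed.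

Definition hfun (b : B) : X := hA (rfun b) + hC (p b).

Lemma rfun_lin : linear rfun.
Proof.
move=> a x y; apply: inj_i.
rewrite rfunP !linearP /= !rfunP.
by rewrite scalerN addrACA scalerBr.
Qed.

Lemma hfun_lin : linear hfun.
Proof.
move=> a x y; rewrite /hfun rfun_lin !linearP /=.
by rewrite scalerDr addrACA.
Qed.

HB.instance Definition _ := GRing.isLinear.Build R^c B X *:%R hfun hfun_lin.
End Split.

Lemma proj_subproj (R : nzRingType) (M Y : rmodType R) :
  projective M -> subproj_in M Y.
Proof.
move=> PM B g f eg.
have [s Hs] := PM B M g (@idfun M) eg.
exists (s \o f)%FUN => y /=; exact: Hs.
Qed.

Lemma ses_proj (R : nzRingType) (A B C : rmodType R) (i : {linear A -> B})
  (p : {linear B -> C}) : short_exact i p -> projective A -> projective C ->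
  projective B.
Proof.
move=> [inj_i [ep ex_i]] PA PC X Y g f eg.
have [s Hs] := PC B C p (@idfun C) ep.
have [hA HA] := PA X Y g (f \o i)%FUN eg.
have [hC HC] := PC X Y g (f \o s)%FUN eg.
exists (@hfun _ _ _ _ _ i p s hA hC ex_i Hs) => b /=.
rewrite /hfun linearD /= HA HC /= -linearD /= rfunP.
by rewrite subrK.
Unshelve. exact: inj_i.
Qed.

Theorem mainTheorem19 (R : nzRingType) :
  no_right_subprojective_middle_class R ->
  forall M : rmodType R, subproj_ext_reflecting M.
Proof.
move=> H M A B C i p ses sA sC.
have [PM|IM] := H M; first exact: proj_subproj.
have PA : projective A.
  have [//|IA] := H A.
  have PM := proj1 (IA M) sA; apply/(IM A).1 => ? ? ? ?; exact: PM.
have PC : projective C.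
  have [//|IC] := H C.
  have PM := proj1 (IC M) sC; apply/(IM C).1 => ? ? ? ?; exact: PM.
have PB := ses_proj ses PA PC.
move=> X g f eg; exact: PB.
Qed.
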